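(* Let $\varphi(x)=\frac{1}{\sqrt2}e^{-x^2/2}$ and define $\sigma:\mathbb R\to\mathbb R$ by $\sigma(x)=\sum_{j=1}^\infty\varphi(x-j)$. Then $\sigma$ is $1$-Lipschitz, nonnegative, bounded above by $2.5$, and $\lim_{x\to-\infty}\sigma(x)=0$. *)

(* Defs.v *)
From Stdlib Require Import Reals.
From Coquelicot Require Import Coquelicot.
Open Scope R_scope.

Definition phi (x : R) : R := / sqrt 2 * exp (- (x ^ 2) / 2).

(* sigma(x) = sum_{j>=1} phi(x - j); index n : nat corresponds to j = n+1 *)
Definition sigma_act (x : R) : R := Series (fun n : nat => phi (x - INR (S n))).

(* Main.v *)
Require Import Defs.
From Stdlib Require Import Reals Lra Lia ZArith.
From Coquelicot Require Import Coquelicot.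
Open Scope R_scope.

Lemma sum_front (G : nat -> R) (N : nat) :
  sum_f_R0 G (S N) = G 0%nat + sum_f_R0 (fun n => G (S n)) N.
Proof.
  induction N as [|N IH].
  - simpl. ring.
  - change (sum_f_R0 G (S (S N))) with (sum_f_R0 G (S N) + G (S (S N))).
    rewrite IH. simpl. ring.
Qed.

Lemma sum_rev (F : nat -> R) (N : nat) :
  sum_f_R0 F N = sum_f_R0 (fun n => F (N - n)%nat) N.
Proof.
  induction N as [|N IH].
  - simpl. reflexivity.
  - rewrite (sum_front (fun n => F (S N - n)%nat)). simpl.
    rewrite <- IH. ring.
Qed.

Lemma sum_nonneg_ext (F : nat -> R) (K m : nat) :
  (forall n, 0 <= F n) -> sum_f_R0 F K <= sum_f_R0 F (K + m).
Proof.
  intros H. induction m as [|m IH].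
  - rewrite Nat.add_0_r. lra.
  - replace (K + S m)%nat with (S (K + m)) by lia. simpl. specialize (H (S (K+m))). lra.
Qed.

Section Lattice.
Variable p : R -> R.
Variable M : R.
Hypothesis Hp : forall s, 0 <= s -> 0 <= p s.
Hypothesis Good01 : forall e, 0 <= e <= 1 -> forall K,
  sum_f_R0 (fun k => p (e + INR k)) K <= M.

Lemma M_nonneg : 0 <= M.
Proof.
  specialize (Good01 0 ltac:(lra) 0%nat). simpl in Good01.
  specialize (Hp (0 + 0) ltac:(lra)). lra.
Qed.

Lemma GoodM : forall m : nat, forall e, 0 <= e <= INR m + 1 -> forall K,
  sum_f_R0 (fun k => p (e + INR k)) K <= M.
Proof.
  induction m as [|m IH]; intros e He K.
  - apply Good01. simpl in He. lra.
  - destruct (Rle_dec e (INR m + 1)) as [h|h].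
    + apply IH; lra.
    + rewrite S_INR in He.
      assert (H1 := IH (e - 1) ltac:(pose proof (pos_INR m); lra) (S K)).
      rewrite sum_front in H1.
      assert (E : sum_f_R0 (fun n => p (e - 1 + INR (S n))) K
                = sum_f_R0 (fun k => p (e + INR k)) K).
      { apply sum_eq. intros i _. rewrite S_INR. f_equal. ring. }
      rewrite E in H1.
      assert (0 <= p (e - 1 + INR 0)) by (apply Hp; simpl; pose proof (pos_INR m); lra).
      lra.
Qed.

Lemma GoodAll : forall e, 0 <= e -> forall K,
  sum_f_R0 (fun k => p (e + INR k)) K <= M.
Proof.
  intros e He K.
  destruct (archimed e) as [H1 H2].
  assert (Hz : (0 < up e)%Z) by (apply lt_0_IZR; lra).
  apply (GoodM (Z.to_nat (up e))).
  rewrite INR_IZR_INZ, Z2Nat.id by lia. lra.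
Qed.

Definition ind (c : R) : R := if Rle_dec 0 c then p c else 0.

Lemma ind_sum_le : forall N c, sum_f_R0 (fun n => ind (c + INR n)) N <= M.
Proof.
  induction N as [|N IH]; intros c.
  - simpl. unfold ind. destruct (Rle_dec 0 (c+0)).
    + specialize (GoodAll (c+0) r 0%nat). simpl. rewrite Rplus_0_r. auto.
    + apply M_nonneg.
  - rewrite sum_front. unfold ind at 1. simpl INR at 1.
    destruct (Rle_dec 0 (c + 0)) as [h|h].
    + assert (E : sum_f_R0 (fun n => ind (c + INR (S n))) N =
                  sum_f_R0 (fun n => p (c + INR (S n))) N).
      { apply sum_eq. intros i _. unfold ind. destruct (Rle_dec 0 (c + INR (S i))); auto.
        exfalso. pose proof (pos_INR (S i)). lra. }
      rewrite E. pose proof (GoodAll c ltac:(lra) (S N)) as G.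
      rewrite sum_front in G. change (INR 0) with 0 in G. exact G.
    + assert (E : sum_f_R0 (fun n => ind (c + INR (S n))) N =
                  sum_f_R0 (fun n => ind ((c + 1) + INR n)) N).
      { apply sum_eq. intros i _. rewrite S_INR. f_equal. ring. }
      rewrite E. specialize (IH (c+1)). lra.
Qed.

Lemma ind_nonneg : forall c, 0 <= ind c.
Proof. intros c. unfold ind. destruct (Rle_dec 0 c); [apply Hp; auto | lra]. Qed.

End Lattice.

Lemma exp_mul_nat (m : nat) (a : R) : exp (INR m * a) = exp a ^ m.
Proof.
  induction m as [|m IH].
  - simpl. rewrite Rmult_0_l. apply exp_0.
  - rewrite S_INR, Rmult_plus_distr_r, Rmult_1_l, exp_plus, IH. simpl. ring.
Qed.

Lemma sqrt2_pos : 0 < sqrt 2.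
Proof. apply sqrt_lt_R0. lra. Qed.

Lemma phi_pos t : 0 < phi t.
Proof. unfold phi. apply Rmult_lt_0_compat. apply Rinv_0_lt_compat, sqrt2_pos. apply exp_pos. Qed.

Lemma phi_even t : phi (- t) = phi t.
Proof. unfold phi. replace ((-t)^2) with (t^2) by ring. reflexivity. Qed.

Lemma phi_dec a b : 0 <= a <= b -> phi b <= phi a.
Proof.
  intros H. unfold phi. apply Rmult_le_compat_l.
  left; apply Rinv_0_lt_compat, sqrt2_pos.
  destruct (Req_dec (- b^2/2) (- a^2/2)) as [E|E]; [rewrite E; lra|].
  left. apply exp_increasing. nra.
Qed.

Lemma phi_derive (t : R) : is_derive phi t (- t * phi t).
Proof. unfold phi. auto_derive; auto.
  replace (- t ^ 2 / 2) with (- (t * (t * 1)) * / 2) by field.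
  generalize (exp (- (t * (t * 1)) * / 2)). intro e. field.
  apply Rgt_not_eq, sqrt_lt_R0; lra.
Qed.


Definition rr : R := exp (- (1/2)).

Lemma rr_bounds : 0 < rr <= 25/41.
Proof.
  assert (HE : exp (1/2) = exp (1/64) ^ 32).
  { rewrite <- exp_mul_nat. f_equal. simpl. field. }
  assert (H1 : 65/64 <= exp (1/64)) by (pose proof (exp_ineq1_le (1/64)); lra).
  assert (H2 : (65/64)^32 <= exp (1/64) ^ 32) by (apply pow_incr; lra).
  assert (H3 : 41/25 <= (65/64)^32) by (simpl; lra).
  assert (H4 : rr * exp (1/2) = 1).
  { unfold rr. rewrite <- exp_plus. replace (- (1/2) + 1/2) with 0 by ring. apply exp_0. }
  assert (H5 : 0 < rr) by apply exp_pos.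
  split; auto. nra.
Qed.

Lemma pow_dec_le (x : R) (m n : nat) : 0 <= x <= 1 -> (m <= n)%nat -> x ^ n <= x ^ m.
Proof.
  intros Hx Hmn. replace n with (m + (n - m))%nat by lia. rewrite pow_add.
  assert (x ^ (n - m) <= 1) by (rewrite <- (pow1 (n - m)); apply pow_incr; lra).
  assert (0 <= x ^ (n - m)) by (apply pow_le; lra).
  assert (0 <= x ^ m) by (apply pow_le; lra). nra.
Qed.

Lemma exp_sq (k : nat) : exp (- (INR k) ^ 2 / 2) = rr ^ (k * k).
Proof. unfold rr. rewrite <- exp_mul_nat, mult_INR. f_equal. field. Qed.

Definition bseq (b0 b1 b2 C rho : R) (k : nat) : R :=
  match k with
  | 0%nat => b0 | 1%nat => b1 | 2%nat => b2
  | S (S (S j)) => C * rho ^ j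
  end.

Lemma bseq_sum b0 b1 b2 C rho T : 0 <= b0 -> 0 <= b1 -> 0 <= b2 -> 0 <= C -> 0 <= rho < 1 ->
  C <= T * (1 - rho) ->
  forall K, sum_f_R0 (bseq b0 b1 b2 C rho) K <= b0 + b1 + b2 + T.
Proof.
  intros H0 H1 H2 HC Hr HT.
  assert (Hnn : forall k, 0 <= bseq b0 b1 b2 C rho k).
  { intros [|[|[|j]]]; simpl; auto. apply Rmult_le_pos; auto. apply pow_le; lra. }
  assert (Hs : forall j, sum_f_R0 (bseq b0 b1 b2 C rho) (3 + j)
                 = b0 + b1 + b2 + C * sum_f_R0 (fun i => rho ^ i) j).
  { induction j as [|j IH].
    - simpl. ring.
    - replace (3 + S j)%nat with (S (3 + j)) by lia.
      change (sum_f_R0 (bseq b0 b1 b2 C rho) (S (3 + j)))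
        with (sum_f_R0 (bseq b0 b1 b2 C rho) (3 + j) + bseq b0 b1 b2 C rho (S (3 + j))).
      rewrite IH. simpl (bseq _ _ _ _ _ (S (3 + j))).
      change (sum_f_R0 (fun i => rho ^ i) (S j)) with (sum_f_R0 (fun i => rho ^ i) j + rho ^ (S j)).
      change (rho ^ S j) with (rho * rho ^ j). ring. }
  intros K. apply Rle_trans with (sum_f_R0 (bseq b0 b1 b2 C rho) (3 + K)).
  { rewrite Nat.add_comm. apply sum_nonneg_ext; auto. }
  rewrite Hs, tech3 by lra.
  assert (0 <= rho ^ (S K)) by (apply pow_le; lra).
  assert (C * ((1 - rho ^ S K) / (1 - rho)) <= T).
  { apply Rle_trans with (C / (1 - rho)).
    - unfold Rdiv. rewrite <- Rmult_assoc. apply Rmult_le_compat_r.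
      left; apply Rinv_0_lt_compat; lra. nra.
    - apply Rmult_le_reg_r with (1 - rho). lra.
      unfold Rdiv. rewrite Rmult_assoc, Rinv_l by lra. lra. }
  lra.
Qed.

Lemma sqrt2_lb : 14136/10000 <= sqrt 2.
Proof.
  rewrite <- (sqrt_square (14136/10000)) by lra.
  apply sqrt_le_1_alt. lra.
Qed.

Lemma inv_sqrt2 : / sqrt 2 <= 10000/14136.
Proof.
  replace (10000/14136) with (/ (14136/10000)) by field.
  apply Rinv_le_contravar. lra. apply sqrt2_lb.
Qed.

Lemma rr_pow_bound (n : nat) : rr ^ n <= (25/41) ^ n.
Proof. apply pow_incr. pose proof rr_bounds. lra. Qed.

Lemma tail_pow (j : nat) : rr ^ (S (S (S j)) * S (S (S j))) <= rr ^ 9 * (rr ^ 6) ^ j.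
Proof.
  rewrite <- pow_mult, <- pow_add. apply pow_dec_le.
  pose proof rr_bounds; lra. nia.
Qed.

Lemma NumA : forall e, 0 <= e <= 1 -> forall K,
  sum_f_R0 (fun k => phi (e + INR k)) K <= 5/4.
Proof.
  intros e He K. pose proof rr_bounds as Hr.
  apply Rle_trans with (sum_f_R0 (fun k => phi (INR k)) K).
  { apply sum_Rle. intros n _. apply phi_dec. pose proof (pos_INR n). lra. }
  apply Rle_trans with (sum_f_R0 (fun k => bseq 1 rr (rr^4) (rr^9) (rr^6) k * / sqrt 2) K).
  { apply sum_Rle. intros k _. unfold phi. rewrite Rmult_comm.
    apply Rmult_le_compat_r. left; apply Rinv_0_lt_compat, sqrt_lt_R0; lra.
    rewrite exp_sq.
    destruct k as [|[|[|j]]]; simpl bseq.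
    - simpl. lra.
    - simpl. lra.
    - apply Rle_refl.
    - apply tail_pow. }
  rewrite <- scal_sum.
  assert (H4 := rr_pow_bound 4). assert (H6 := rr_pow_bound 6). assert (H9 := rr_pow_bound 9).
  simpl ((25/41)^4) in H4. simpl ((25/41)^6) in H6. simpl ((25/41)^9) in H9.
  assert (P4 : 0 <= rr ^ 4) by (apply pow_le; lra).
  assert (P6 : 0 <= rr ^ 6) by (apply pow_le; lra).
  assert (P9 : 0 <= rr ^ 9) by (apply pow_le; lra).
  assert (HS := bseq_sum 1 rr (rr^4) (rr^9) (rr^6) (125/10000) ltac:(lra) ltac:(lra) P4 P9
     ltac:(lra) ltac:(lra) K).
  assert (HS' : sum_f_R0 (bseq 1 rr (rr ^ 4) (rr ^ 9) (rr ^ 6)) K <= 17606/10000) by lra.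
  assert (0 <= sum_f_R0 (bseq 1 rr (rr ^ 4) (rr ^ 9) (rr ^ 6)) K).
  { apply cond_pos_sum. intros [|[|[|j]]]; simpl; try lra. apply Rmult_le_pos; auto. apply pow_le; lra. }
  pose proof inv_sqrt2.
  assert (0 < / sqrt 2) by (apply Rinv_0_lt_compat, sqrt_lt_R0; lra).
  nra.
Qed.

Definition gfun (s : R) : R := s * phi s.
Definition hf (s : R) : R := s * exp (- s ^ 2 / 2).

Lemma gfun_hf s : gfun s = hf s * / sqrt 2.
Proof. unfold gfun, hf, phi. ring. Qed.

Lemma exp_split a b : exp a = exp (a - b) * exp b.
Proof. rewrite <- exp_plus. f_equal. ring. Qed.

Lemma hmax s : 0 <= s -> hf s <= rr.
Proof.
  intros Hs. unfold hf, rr.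
  rewrite (exp_split (- (1/2)) (- s ^ 2 / 2)).
  apply Rmult_le_compat_r. left; apply exp_pos.
  pose proof (exp_ineq1_le (- (1/2) - - s ^ 2 / 2)).
  assert (0 <= (s - 1)^2) by apply pow2_ge_0. nra.
Qed.

Lemma hdec a b : 1 <= a <= b -> hf b <= hf a.
Proof.
  intros H. unfold hf.
  rewrite (exp_split (- a ^ 2 / 2) (- b ^ 2 / 2)).
  pose proof (exp_ineq1_le (- a ^ 2 / 2 - - b ^ 2 / 2)).
  pose proof (exp_pos (- b ^ 2 / 2)).
  assert (b <= a * exp (- a ^ 2 / 2 - - b ^ 2 / 2)).
  { apply Rle_trans with (a * (1 + (- a ^ 2 / 2 - - b ^ 2 / 2))).
    - assert (0 <= (b - a) * (a * (b + a) / 2 - 1)).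
      { apply Rmult_le_pos. lra. nra. }
      nra.
    - apply Rmult_le_compat_l; lra. }
  rewrite <- Rmult_assoc. apply Rmult_le_compat_r; lra.
Qed.

Lemma hsmall s : 0 <= s <= 1/2 -> hf s <= 4/9.
Proof.
  intros Hs. unfold hf.
  pose proof (exp_ineq1_le (s ^ 2 / 2)).
  assert (Hm : exp (- s ^ 2 / 2) * exp (s ^ 2 / 2) = 1).
  { rewrite <- exp_plus. replace (- s ^ 2 / 2 + s ^ 2 / 2) with 0 by field. apply exp_0. }
  pose proof (exp_pos (- s ^ 2 / 2)).
  assert (s <= 4/9 * exp (s ^ 2 / 2)) by nra.
  nra.
Qed.

Lemma exp_m18 : exp (- (1/8)) <= 8/9.
Proof.
  pose proof (exp_ineq1_le (1/8)).
  assert (Hm : exp (- (1/8)) * exp (1/8) = 1).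
  { rewrite <- exp_plus. replace (- (1/8) + 1/8) with 0 by field. apply exp_0. }
  pose proof (exp_pos (- (1/8))). nra.
Qed.

Lemma h32 : hf (3/2) <= 4/3 * rr ^ 2.
Proof.
  unfold hf. replace (- (3/2) ^ 2 / 2) with (INR 2 * (- (1/2)) + - (1/8)) by (simpl; field).
  rewrite exp_plus, exp_mul_nat. fold rr.
  pose proof exp_m18. pose proof (exp_pos (- (1/8))).
  assert (0 <= rr ^ 2) by apply pow2_ge_0. nra.
Qed.

Lemma h52 : hf (5/2) <= 20/9 * rr ^ 6.
Proof.
  unfold hf. replace (- (5/2) ^ 2 / 2) with (INR 6 * (- (1/2)) + - (1/8)) by (simpl; field).
  rewrite exp_plus, exp_mul_nat. fold rr.
  pose proof exp_m18. pose proof (exp_pos (- (1/8))).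
  assert (0 <= rr ^ 6) by (apply pow_le; pose proof rr_bounds; lra). nra.
Qed.

Lemma pow2_lb (j : nat) : 1 + INR j <= 2 ^ j.
Proof.
  induction j as [|j IH]. simpl; lra.
  rewrite S_INR. simpl. pose proof (pos_INR j). lra.
Qed.

Lemma h_tail (j : nat) (e : R) : 0 <= e ->
  hf (e + INR (S (S (S j)))) <= 3 * rr ^ 9 * (2 * rr ^ 6) ^ j.
Proof.
  intros He. pose proof rr_bounds as Hr.
  apply Rle_trans with (hf (INR (S (S (S j))))).
  { apply hdec. split. rewrite !S_INR. pose proof (pos_INR j). lra. lra. }
  unfold hf. rewrite exp_sq.
  pose proof (tail_pow j).
  assert (INR (S (S (S j))) <= 3 * 2 ^ j).
  { rewrite !S_INR. pose proof (pow2_lb j). pose proof (pos_INR j). lra. }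
  rewrite Rpow_mult_distr.
  assert (0 <= rr ^ (S (S (S j)) * S (S (S j)))) by (apply pow_le; lra).
  assert (0 <= rr ^ 9 * (rr ^ 6) ^ j) by (apply Rmult_le_pos; apply pow_le; [lra| apply pow_le; lra]).
  assert (0 <= 2 ^ j) by (apply pow_le; lra).
  pose proof (pos_INR (S (S (S j)))).
  apply Rle_trans with (3 * 2 ^ j * (rr ^ 9 * (rr ^ 6) ^ j)).
  - apply Rmult_le_compat; auto.
  - right. ring.
Qed.

Lemma NumB : forall e, 0 <= e <= 1 -> forall K,
  sum_f_R0 (fun k => gfun (e + INR k)) K <= 1.
Proof.
  intros e He K. pose proof rr_bounds as Hr.
  assert (H2 := rr_pow_bound 2). assert (H4 := rr_pow_bound 4).
  assert (H6 := rr_pow_bound 6). assert (H9 := rr_pow_bound 9).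
  simpl ((25/41)^2) in H2. simpl ((25/41)^4) in H4. simpl ((25/41)^6) in H6. simpl ((25/41)^9) in H9.
  assert (P2 : 0 <= rr ^ 2) by (apply pow_le; lra).
  assert (P4 : 0 <= rr ^ 4) by (apply pow_le; lra).
  assert (P6 : 0 <= rr ^ 6) by (apply pow_le; lra).
  assert (P9 : 0 <= rr ^ 9) by (apply pow_le; lra).
  pose proof inv_sqrt2.
  assert (0 < / sqrt 2) by (apply Rinv_0_lt_compat, sqrt_lt_R0; lra).
  assert (Hfin : forall b0 b1 b2, 0 <= b0 -> 0 <= b1 -> 0 <= b2 -> b0 + b1 + b2 <= 137/100 ->
     (forall k, hf (e + INR k) <= bseq b0 b1 b2 (3 * rr ^ 9) (2 * rr ^ 6) k) ->
     sum_f_R0 (fun k => gfun (e + INR k)) K <= 1).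
  { intros b0 b1 b2 Hb0 Hb1 Hb2 Hsum Hk.
    apply Rle_trans with (sum_f_R0 (fun k => bseq b0 b1 b2 (3 * rr ^ 9) (2 * rr ^ 6) k * / sqrt 2) K).
    { apply sum_Rle. intros k _. rewrite gfun_hf. apply Rmult_le_compat_r. lra. apply Hk. }
    rewrite <- scal_sum.
    assert (HS := bseq_sum b0 b1 b2 (3 * rr ^ 9) (2 * rr ^ 6) (4/100) Hb0 Hb1 Hb2
      ltac:(lra) ltac:(lra) ltac:(lra) K).
    assert (0 <= sum_f_R0 (bseq b0 b1 b2 (3 * rr ^ 9) (2 * rr ^ 6)) K).
    { apply cond_pos_sum. intros [|[|[|j]]]; simpl; try lra. apply Rmult_le_pos. lra. apply pow_le; lra. }
    nra. }
  destruct (Rle_dec e (1/2)) as [Hs|Hs].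
  - apply (Hfin (4/9) rr (2 * rr ^ 4)); try lra.
    intros [|[|[|j]]]; simpl bseq.
    + simpl INR. rewrite Rplus_0_r. apply hsmall. lra.
    + apply hmax. simpl INR. lra.
    + apply Rle_trans with (hf 2). apply hdec. simpl INR. lra.
      unfold hf. replace (- 2 ^ 2 / 2) with (- (INR 2) ^ 2 / 2) by (simpl; field).
      rewrite exp_sq. simpl. lra.
    + apply h_tail. lra.
  - apply (Hfin rr (4/3 * rr ^ 2) (20/9 * rr ^ 6)); try lra.
    intros [|[|[|j]]]; simpl bseq.
    + apply hmax. simpl INR. lra.
    + apply Rle_trans with (hf (3/2)). apply hdec. simpl INR. lra. apply h32.
    + apply Rle_trans with (hf (5/2)). apply hdec. simpl INR. lra. apply h52.
    + apply h_tail. lra.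
Qed.

Section Sides.
Variable p : R -> R.
Variable M : R.
Hypothesis Hp : forall s, 0 <= s -> 0 <= p s.
Hypothesis Good01 : forall e, 0 <= e <= 1 -> forall K,
  sum_f_R0 (fun k => p (e + INR k)) K <= M.

Lemma pos_side x N : sum_f_R0 (fun n => ind p (x - INR (S n))) N <= M.
Proof.
  rewrite sum_rev.
  rewrite (sum_eq _ (fun n => ind p ((x - INR N - 1) + INR n))).
  apply ind_sum_le; auto.
  intros i Hi. f_equal. rewrite S_INR, minus_INR by auto. ring.
Qed.

Lemma neg_side x N : sum_f_R0 (fun n => ind p (- (x - INR (S n)))) N <= M.
Proof.
  rewrite (sum_eq _ (fun n => ind p ((1 - x) + INR n))).
  apply ind_sum_le; auto.
  intros i Hi. f_equal. rewrite S_INR. ring.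
Qed.
End Sides.

Definition PS (N : nat) (x : R) : R := sum_f_R0 (fun n => phi (x - INR (S n))) N.
Definition DPS (N : nat) (x : R) : R :=
  sum_f_R0 (fun n => - (x - INR (S n)) * phi (x - INR (S n))) N.

Lemma PS_bounds N x : 0 <= PS N x <= 5/2.
Proof.
  split.
  - apply cond_pos_sum. intros n. left; apply phi_pos.
  - unfold PS.
    apply Rle_trans with (sum_f_R0 (fun n => ind phi (x - INR (S n)) + ind phi (- (x - INR (S n)))) N).
    + apply sum_Rle. intros n _. unfold ind.
      destruct (Rle_dec 0 (x - INR (S n))); destruct (Rle_dec 0 (- (x - INR (S n)))).
      * pose proof (phi_pos (- (x - INR (S n)))). lra.
      * lra.
      * rewrite phi_even. lra.
      * exfalso; lra.
    + rewrite plus_sum.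
      assert (Hp : forall s, 0 <= s -> 0 <= phi s) by (intros; left; apply phi_pos).
      pose proof (pos_side phi (5/4) Hp NumA x N).
      pose proof (neg_side phi (5/4) Hp NumA x N). lra.
Qed.

Lemma DPS_bound N x : Rabs (DPS N x) <= 1.
Proof.
  assert (Hp : forall s, 0 <= s -> 0 <= gfun s).
  { intros s Hs. unfold gfun. pose proof (phi_pos s). nra. }
  assert (E : DPS N x = sum_f_R0 (fun n => ind gfun (- (x - INR (S n)))) N
                      - sum_f_R0 (fun n => ind gfun (x - INR (S n))) N).
  { unfold DPS. rewrite <- minus_sum. apply sum_eq. intros i _. unfold ind, gfun.
    set (t := x - INR (S i)).
    destruct (Rle_dec 0 (- t)); destruct (Rle_dec 0 t).
    - assert (t = 0) by lra. subst t. rewrite H. rewrite Ropp_0. ring.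
    - rewrite phi_even. ring.
    - ring.
    - exfalso; lra. }
  rewrite E.
  pose proof (pos_side gfun 1 Hp NumB x N).
  pose proof (neg_side gfun 1 Hp NumB x N).
  pose proof (cond_pos_sum (fun n => ind gfun (- (x - INR (S n)))) N (fun n => ind_nonneg gfun Hp _)).
  pose proof (cond_pos_sum (fun n => ind gfun (x - INR (S n))) N (fun n => ind_nonneg gfun Hp _)).
  apply Rabs_le. lra.
Qed.

Lemma term_derive (c x : R) :
  is_derive (fun y => phi (y - c)) x (- (x - c) * phi (x - c)).
Proof. unfold phi. auto_derive; auto.
  replace (x + - c) with (x - c) by ring.
  replace (- (x - c) ^ 2 / 2) with (- ((x - c) * ((x - c) * 1)) * / 2) by field.
  generalize (exp (- ((x - c) * ((x - c) * 1)) * / 2)). intro e.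
  field. apply Rgt_not_eq, sqrt_lt_R0; lra.
Qed.

Lemma PS_derive N x : is_derive (PS N) x (DPS N x).
Proof.
  induction N as [|N IH].
  - unfold PS, DPS. simpl. apply term_derive.
  - change (PS (S N)) with (fun y => PS N y + phi (y - INR (S (S N)))).
    change (DPS (S N) x) with (DPS N x + (- (x - INR (S (S N))) * phi (x - INR (S (S N))))).
    apply (is_derive_plus (PS N) (fun y => phi (y - INR (S (S N))))); auto.
    apply term_derive.
Qed.

Lemma PS_lip N x y : Rabs (PS N x - PS N y) <= Rabs (x - y).
Proof.
  destruct (MVT_cor4 (PS N) (DPS N) y (Rabs (x - y)) (fun c _ => PS_derive N c) x (Rle_refl _))
    as [c [Hc _]].
  rewrite Hc, Rabs_mult.
  pose proof (DPS_bound N c). pose proof (Rabs_pos (x - y)).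
  rewrite <- (Rmult_1_l (Rabs (x - y))) at 2.
  apply Rmult_le_compat_r; auto.
Qed.

Lemma exp_nat (n : nat) : exp (- INR n) = exp (-1) ^ n.
Proof.
  induction n as [|n IH].
  - simpl. rewrite Ropp_0. apply exp_0.
  - rewrite S_INR. replace (- (INR n + 1)) with (- INR n + -1) by ring.
    rewrite exp_plus, IH. simpl. ring.
Qed.

Definition Cx (x : R) : R := exp (x - 1/2) / sqrt 2.
Definition q1 : R := exp (-1).

Lemma q1_bounds : 0 < q1 < 1.
Proof.
  unfold q1. split. apply exp_pos.
  rewrite <- exp_0. apply exp_increasing. lra.
Qed.

Lemma term_bound x n : phi (x - INR (S n)) <= q1 ^ n * Cx x.
Proof.
  unfold phi, Cx, q1. rewrite <- exp_nat.
  apply Rle_trans with (/ sqrt 2 * exp (- INR n + (x - 1 / 2))).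
  - apply Rmult_le_compat_l. left; apply Rinv_0_lt_compat, sqrt2_pos.
    rewrite S_INR.
    destruct (Req_dec (- (x - (INR n + 1)) ^ 2 / 2) (- INR n + (x - 1 / 2))) as [E|E].
    + rewrite E; lra.
    + left. apply exp_increasing.
      assert (0 <= (x - INR n) ^ 2) by (apply pow2_ge_0). nra.
  - right. rewrite exp_plus. field. apply Rgt_not_eq, sqrt2_pos.
Qed.

Lemma Bd_series x : is_series (fun n => q1 ^ n * Cx x) (/ (1 - q1) * Cx x).
Proof.
  apply is_series_scal_r. apply is_series_geom.
  pose proof q1_bounds. rewrite Rabs_pos_eq; lra.
Qed.

Lemma ex_sig x : ex_series (fun n => phi (x - INR (S n))).
Proof.
  apply (@ex_series_le R_AbsRing R_CompleteNormedModule _ (fun n => q1 ^ n * Cx x)).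
  - intros n. change (norm (phi (x - INR (S n)))) with (Rabs (phi (x - INR (S n)))).
    rewrite Rabs_pos_eq by (left; apply phi_pos). apply term_bound.
  - eexists. apply Bd_series.
Qed.

Lemma PS_lim x : is_lim_seq (fun N => PS N x) (sigma_act x).
Proof.
  pose proof (Series_correct _ (ex_sig x)) as H.
  apply is_lim_seq_ext with (sum_n (fun n => phi (x - INR (S n)))).
  - intros N. rewrite sum_n_Reals. reflexivity.
  - exact H.
Qed.

Lemma sigma_upper x : sigma_act x <= / (1 - q1) * Cx x.
Proof.
  unfold sigma_act. rewrite <- (is_series_unique _ _ (Bd_series x)).
  apply Series_le.
  - intros n. split. left; apply phi_pos. apply term_bound.
  - eexists. apply Bd_series.
Qed.

Theorem lemma1 :
  (forall x y : R, Rabs (sigma_act x - sigma_act y) <= Rabs (x - y)) /\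
  (forall x : R, 0 <= sigma_act x) /\
  (forall x : R, sigma_act x <= 5 / 2) /\
  is_lim sigma_act m_infty 0.
Proof.
  assert (Hlow : forall x, 0 <= sigma_act x).
  { intros x. assert (H := is_lim_seq_le (fun _ => 0) (fun N => PS N x) 0 (sigma_act x)
       (fun N => proj1 (PS_bounds N x)) (is_lim_seq_const 0) (PS_lim x)). exact H. }
  split; [|split; [exact Hlow|split]].
  - intros x y.
    assert (H := is_lim_seq_le (fun N => Rabs (PS N x - PS N y)) (fun _ => Rabs (x - y))
       (Rabs (sigma_act x - sigma_act y)) (Rabs (x - y))
       (fun N => PS_lip N x y)
       (is_lim_seq_abs _ _ (is_lim_seq_minus' _ _ _ _ (PS_lim x) (PS_lim y)))
       (is_lim_seq_const _)). exact H.
  - intros x.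
    assert (H := is_lim_seq_le (fun N => PS N x) (fun _ => 5/2) (sigma_act x) (5/2)
       (fun N => proj2 (PS_bounds N x)) (PS_lim x) (is_lim_seq_const _)). exact H.
  - set (K := / (1 - q1) * (exp (- (1/2)) / sqrt 2)).
    apply (is_lim_le_le_loc (fun _ => 0) (fun y => K * exp y)).
    + apply filter_forall. intros y. split. apply Hlow.
      eapply Rle_trans. apply sigma_upper. right. unfold K, Cx.
      replace (y - 1/2) with (y + - (1/2)) by ring. rewrite exp_plus. unfold Rdiv. ring.
    + apply is_lim_const.
    + replace (Finite 0) with (Rbar_mult K 0) by (simpl; f_equal; ring).
      apply is_lim_scal_l. apply is_lim_exp_m.
Qed.
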